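(* Under the hypotheses and notation of the context, let $\mathcal{S}=\{x_1,\dots,x_k\}\times\mathbb{R}$. Let $\theta^{\mathrm{approx}}$ be any gradient-based update of $\theta^{\mathrm{full}}$ in which every dataset $D_t$ used satisfies $D_t\subseteq\mathcal{S}$. Then $$\|\theta^{\setminus k}-\theta^{\mathrm{res}}\|_2\le\|\theta^{\setminus k}-\theta^{\mathrm{approx}}\|_2 .$$
   Context: Let $x_1,\dots,x_n\in\mathbb{R}^d$, $y_1,\dots,y_n\in\mathbb{R}$, $1\le k\le d$, $n-k\ge d$, with the $x_i$ in general position, and fix $\lambda\ge0$. $X$ is the matrix with rows $x_i^\intercal$, $Y=(y_i)$. $\theta^{\mathrm{full}}=\arg\min_\theta\sum_{i=1}^n\frac12(\theta^\intercal x_i-y_i)^2+\frac\lambda2\|\theta\|^2$ and $\theta^{\setminus k}=\arg\min_\theta\sum_{i=k+1}^n\frac12(\theta^\intercal x_i-y_i)^2+\frac\lambda2\|\theta\|^2$. With $\hat y^{\setminus k}_i=(\theta^{\setminus k})^\intercal x_i$ and $A$ the Moore–Penrose pseudoinverse of $\sum_{i=1}^k x_ix_i^\intercal$, the projective residual update is $\theta^{\mathrm{res}}=\theta^{\mathrm{full}}-A\sum_{i=1}^k((\theta^{\mathrm{full}})^\intercal x_i-\hat y^{\setminus k}_i)x_i$. For a finite dataset $D=\{(\bar x_i,\bar y_i)\}_{i=1}^N$ set $L^D(\theta)=\sum_{i=1}^N\frac12(\theta^\intercal\bar x_i-\bar y_i)^2$. A gradient-based update of $\theta^{\mathrm{full}}$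 is any vector $\theta^{\mathrm{approx}}=\theta_T$ obtained by $\theta_0=\theta^{\mathrm{full}}$, $\theta_{t+1}=\theta_t-\alpha_t\nabla_\theta L^{D_t}(\theta_t)$ for some $T\ge0$, scalars $\alpha_t\in\mathbb{R}$ and finite datasets $D_t$. *)

(* Defs.v *)
(* Real numbers are modelled by an arbitrary real closed field
   R : rcfType (the statement is purely algebraic/order-theoretic). *)
From HB Require Import structures.
From mathcomp Require Import all_boot all_order all_algebra.
Set Implicit Arguments. Unset Strict Implicit. Unset Printing Implicit Defensive.
Import Order.TTheory GRing.Theory Num.Theory.
Local Open Scope ring_scope.

Section Defs.
Variable R : rcfType.

Definition vdot (d : nat) (u v : 'cV[R]_d) : R := \sum_(j < d) u j 0 * v j 0.
Definition norm2 (d : nat) (v : 'cV[R]_d) : R := Num.sqrt (vdot v v).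

Definition xpt (n d : nat) (X : 'M[R]_(n, d)) (i : 'I_n) : 'cV[R]_d := (row i X)^T.

Definition general_position (n d : nat) (X : 'M[R]_(n, d)) : Prop :=
  forall f : 'I_d -> 'I_n, injective f ->
    \det (\matrix_(i < d, j < d) X (f i) j) != 0.

Definition loss_full (n d : nat) (X : 'M[R]_(n, d)) (Y : 'cV[R]_n) (lam : R)
  (th : 'cV[R]_d) : R :=
  \sum_(i < n) 2^-1 * (vdot th (xpt X i) - Y i 0) ^+ 2 + lam / 2 * vdot th th.

(* objective with the first k points removed: sum_{i=k+1}^n ...  (0-based: i >= k) *)
Definition loss_minus (n d k : nat) (X : 'M[R]_(n, d)) (Y : 'cV[R]_n) (lam : R)
  (th : 'cV[R]_d) : R :=
  \sum_(i < n | (k <= i)%N) 2^-1 * (vdot th (xpt X i) - Y i 0) ^+ 2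
  + lam / 2 * vdot th th.

Definition is_argmin (d : nat) (L : 'cV[R]_d -> R) (th : 'cV[R]_d) : Prop :=
  forall th', L th <= L th'.

(* A is the Moore-Penrose pseudoinverse of M (Penrose conditions; over a real
   field the conjugate transpose is the transpose) *)
Definition is_MP_pinv (d : nat) (M A : 'M[R]_d) : Prop :=
  [/\ M *m A *m M = M, A *m M *m A = A,
      (M *m A)^T = M *m A & (A *m M)^T = A *m M].

(* a finite dataset: a finite set (duplicate-free list) of pairs (xbar, ybar) *)
Definition dataset (d : nat) := seq ('cV[R]_d * R).

(* gradient of L^D(θ) = sum 1/2 (θ^T xbar - ybar)^2, i.e. sum (θ^T xbar - ybar) xbar *)
Definition gradL (d : nat) (D : dataset d) (th : 'cV[R]_d) : 'cV[R]_d :=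
  \sum_(p <- D) (vdot th p.1 - p.2) *: p.1.

Fixpoint gd_iter (d : nat) (th0 : 'cV[R]_d) (alpha : nat -> R)
  (Ds : nat -> dataset d) (t : nat) : 'cV[R]_d :=
  match t with
  | 0 => th0
  | t'.+1 => let th := gd_iter th0 alpha Ds t' in
             th - alpha t' *: gradL (Ds t') th
  end.

Definition theta_res (n d k : nat) (X : 'M[R]_(n, d)) (A : 'M[R]_d)
  (thfull thminus : 'cV[R]_d) : 'cV[R]_d :=
  thfull - A *m (\sum_(i < n | (i < k)%N)
                   (vdot thfull (xpt X i) - vdot thminus (xpt X i)) *: xpt X i).

End Defs.

(* Main.v *)
Require Import Defs.
From HB Require Import structures.
From mathcomp Require Import all_boot all_order all_algebra.
From mathcomp Require Import ring.
Import Order.TTheory GRing.Theory Num.Theory.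
Local Open Scope ring_scope.

Section Aux.
Variable R : rcfType.
Variable d : nat.

Lemma vdot_mx (u v : 'cV[R]_d) : vdot u v = (u^T *m v) 0 0.
Proof. by rewrite /vdot !mxE; apply: eq_bigr => j _; rewrite !mxE. Qed.

Lemma vdotC (u v : 'cV[R]_d) : vdot u v = vdot v u.
Proof. by rewrite /vdot; apply: eq_bigr => j _; rewrite mulrC. Qed.

Lemma vdotBl (u v w : 'cV[R]_d) : vdot (u - v) w = vdot u w - vdot v w.
Proof. by rewrite !vdot_mx linearB /= mulmxBl !mxE. Qed.

Lemma vdot_ge0 (u : 'cV[R]_d) : 0 <= vdot u u.
Proof. by apply: sumr_ge0 => j _; rewrite -expr2 sqr_ge0. Qed.

Lemma vdot_eq0 (u : 'cV[R]_d) : vdot u u = 0 -> u = 0.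
Proof.
move=> h; apply/matrixP => j l; rewrite (ord1 l) mxE.
have hp : forall j : 'I_d, true -> 0 <= u j 0 * u j 0.
  by move=> j' _; rewrite -expr2 sqr_ge0.
move: (psumr_eq0P hp h (i:=j) isT) => /eqP.
by rewrite mulf_eq0 orbb => /eqP.
Qed.

End Aux.

Theorem corollary2 (R : rcfType) (n d k : nat) (X : 'M[R]_(n, d)) (Y : 'cV[R]_n)
  (lam : R) (thfull thminus : 'cV[R]_d) (A : 'M[R]_d)
  (T : nat) (alpha : nat -> R) (Ds : nat -> dataset R d) :
  (1 <= k)%N -> (k <= d)%N -> (d <= n - k)%N ->
  general_position X -> 0 <= lam ->
  is_argmin (loss_full X Y lam) thfull ->
  is_argmin (loss_minus k X Y lam) thminus ->
  is_MP_pinv (\sum_(i < n | (i < k)%N) xpt X i *m (xpt X i)^T) A ->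
  (forall t, (t < T)%N ->
     uniq (Ds t) /\
     (forall p, p \in Ds t -> exists i : 'I_n, (i < k)%N /\ p.1 = xpt X i)) ->
  norm2 (thminus - theta_res k X A thfull thminus)
    <= norm2 (thminus - gd_iter thfull alpha Ds T).
Proof.
move=> _ _ _ _ _ _ _ [hMAM hAMA _ hPsym] hDs.
set x := xpt X.
set M := \sum_(i < n | (i < k)%N) x i *m (x i)^T.
set P := A *m M.
have PP : P *m P = P by rewrite /P mulmxA hAMA.
have Mz z : M *m z = \sum_(i < n | (i < k)%N) vdot z (x i) *: x i.
  rewrite /M mulmx_suml; apply: eq_bigr => i _.
  by rewrite -mulmxA [_ *m z]mx11_scalar mul_mx_scalar -vdot_mx vdotC.
have Pfix (i : 'I_n) : (i < k)%N -> P *m x i = x i.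
  move=> hi; set y := x i - P *m x i.
  have My : M *m y = 0.
    by rewrite /y mulmxBr /P !mulmxA hMAM subrr.
  have Py : P *m y = 0 by rewrite /P -mulmxA My mulmx0.
  have h0 : \sum_(j < n | (j < k)%N) vdot y (x j) ^+ 2 = 0.
    transitivity (vdot y (M *m y)); last by rewrite My vdot_mx mulmx0 mxE.
    rewrite Mz vdot_mx mulmx_sumr summxE; apply: eq_bigr => j _.
    by rewrite -scalemxAr mxE -vdot_mx expr2.
  have hyx : vdot y (x i) = 0.
    have := psumr_eq0P (fun j _ => sqr_ge0 (vdot y (x j))) h0 (i:=i) hi.
    by move/eqP; rewrite sqrf_eq0 => /eqP.
  have : vdot y y = 0.
    rewrite {2}/y vdotC vdotBl (vdotC _ _ (x i)) hyx sub0r vdot_mx.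
    have -> : (P *m x i)^T *m y = (x i)^T *m (P *m y).
      by rewrite trmx_mul hPsym mulmxA.
    by rewrite Py mulmx0 mxE oppr0.
  by move/vdot_eq0/eqP; rewrite subr_eq0 => /eqP <-.
have gd t : (t <= T)%N ->
    P *m (gd_iter thfull alpha Ds t - thfull) = gd_iter thfull alpha Ds t - thfull.
  elim: t => [|t IH] ht /=; first by rewrite subrr mulmx0.
  rewrite addrAC mulmxBr IH ?(ltnW ht) //; congr (_ - _).
  rewrite -scalemxAr; congr (_ *: _).
  rewrite /gradL mulmx_sumr big_seq [RHS]big_seq; apply: eq_bigr => p hp.
  have [_ /(_ p hp) [i [hi ->]]] := hDs t ht.
  by rewrite -scalemxAr Pfix.
set v := gd_iter thfull alpha Ds T - thfull.
have Pv : P *m v = v by apply: gd.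
set w := thminus - thfull.
have e1 : thminus - theta_res k X A thfull thminus = w - P *m w.
  rewrite /theta_res.
  have -> : \sum_(i < n | (i < k)%N)
     (vdot thfull (xpt X i) - vdot thminus (xpt X i)) *: xpt X i
     = M *m (thfull - thminus).
    by rewrite Mz; apply: eq_bigr => i _; rewrite vdotBl.
  rewrite /w mulmxA -/P -[thfull - thminus]opprB mulmxN.
  by rewrite opprK opprD addrA.
have e2 : thminus - gd_iter thfull alpha Ds T = (w - P *m w) + (P *m w - v).
  by rewrite addrA subrK /w /v opprB addrA subrK.
rewrite e1 e2 /norm2 ler_sqrt ?vdot_ge0 //.
set a := w - P *m w; set b := P *m w - v.
have hb : b = P *m (w - v) by rewrite mulmxBr Pv.
have hab : vdot a b = 0.
  rewrite vdot_mx hb /a linearB /= trmx_mul hPsym mulmxBl.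
  by rewrite -/P -(mulmxA w^T P) (mulmxA P P) PP subrr mxE.
have hba : vdot b a = 0 by rewrite vdotC.
have -> : vdot (a + b) (a + b) = vdot a a + vdot b b.
  rewrite /vdot -[in RHS]big_split /=; rewrite /vdot in hab hba.
  transitivity (\sum_(j < d) (a j 0 * a j 0 + b j 0 * b j 0)
     + \sum_(j < d) a j 0 * b j 0 + \sum_(j < d) b j 0 * a j 0);
    last by rewrite hab hba !addr0.
  rewrite -!big_split /=; apply: eq_bigr => j _; rewrite !mxE; ring.
by rewrite lerDl vdot_ge0.
Qed.
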